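(* Let $k$ be a positive integer, $\hat s_k$ an integer, $m_{k-1}\in(0,1)$, and $\hat B_{k,\hat s_k}\in[0,2]$. For integers $\ell\ge\hat s_k$ define $$\hat B_{k,\ell}=\min\big\{2,\ m_{k-1}^{\ell-\hat s_k}(\ell-\hat s_k+1)\hat B_{k,\hat s_k}\big\}.$$ Then for every integer $s$ satisfying $m_{k-1}^{s-\hat s_k}\le\frac{1}{s-\hat s_k+1}$ and $s\ge\frac{km_{k-1}}{1-m_{k-1}}+\hat s_k$, and every integer $\ell\ge s$, $$\hat B_{k,\ell}\le\Big(\frac1k+\frac{k-1}{k}m_{k-1}\Big)^{\ell-s}\hat B_{k,s}.$$ *)

(* Defs.v *)
From Stdlib Require Import Reals ZArith.
Open Scope R_scope.

Definition Bhat (shat : Z) (m B0 : R) (l : Z) : R :=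
  Rmin 2 (m ^ Z.to_nat (l - shat) * (IZR (l - shat) + 1) * B0).

(* Main.v *)
Require Import Defs.
From Stdlib Require Import Reals ZArith Lra Lia Psatz.
Open Scope R_scope.

Lemma izr_tonat (z : Z) : (0 <= z)%Z -> IZR z = INR (Z.to_nat z).
Proof. intro H. rewrite INR_IZR_INZ, Z2Nat.id; auto. Qed.

Theorem lemma5 (k : nat) (shat : Z) (m B0 : R)
  (hk : (0 < k)%nat)
  (hm : 0 < m < 1)
  (hB0 : 0 <= B0 <= 2) :
  forall s : Z,
    m ^ Z.to_nat (s - shat) <= 1 / (IZR (s - shat) + 1) ->
    IZR s >= INR k * m / (1 - m) + IZR shat ->
    forall l : Z, (s <= l)%Z ->
      Bhat shat m B0 l
        <= (1 / INR k + (INR k - 1) / INR k * m) ^ Z.to_nat (l - s)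
           * Bhat shat m B0 s.
Proof.
  intros s Hs1 Hs2 l Hl.
  assert (HK : 0 < INR k) by (apply lt_0_INR; lia).
  set (K := INR k) in *.
  assert (Hq : 0 <= K * m / (1 - m)).
  { unfold Rdiv. apply Rmult_le_pos; [nra|]. left; apply Rinv_0_lt_compat; lra. }
  assert (Hsn : (0 <= s - shat)%Z).
  { apply le_IZR. rewrite minus_IZR. lra. }
  assert (Hn : K * m <= (1 - m) * IZR (s - shat)).
  { rewrite minus_IZR.
    assert (K * m = (1 - m) * (K * m / (1 - m))) by (field; lra). nra. }
  rewrite (izr_tonat (s - shat)) in Hs1, Hn by exact Hsn.
  set (n := Z.to_nat (s - shat)) in *.
  set (t := Z.to_nat (l - s)).
  assert (Hlt : Z.to_nat (l - shat) = (n + t)%nat) by (unfold n, t; lia).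
  unfold Bhat. rewrite Hlt, (izr_tonat (l - shat)) by lia. rewrite Hlt, (izr_tonat (s - shat)) by lia.
  fold n.
  assert (Hpn : 0 < INR n + 1) by (pose proof (pos_INR n); lra).
  assert (Ha : m ^ n * (INR n + 1) * B0 <= 2).
  {
    assert (m ^ n * (INR n + 1) <= 1).
    { unfold Rdiv in Hs1. apply Rmult_le_reg_r with (/ (INR n + 1)).
      apply Rinv_0_lt_compat; lra.
      replace (m ^ n * (INR n + 1) * / (INR n + 1)) with (m ^ n) by (field; lra).
      replace (1 * / (INR n + 1)) with (1 / (INR n + 1)) by (field; lra).
      exact Hs1. }
    assert (0 <= m ^ n) by (apply pow_le; lra). nra. }
  rewrite (Rmin_right 2 (m ^ n * (INR n + 1) * B0)) by exact Ha.
  eapply Rle_trans; [apply Rmin_r|].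
  set (c := 1 / K + (K - 1) / K * m).
  assert (Hc : c * K = 1 + (K - 1) * m) by (unfold c; field; lra).
  clearbody t. clear Hlt Hl.
  induction t as [|t IH].
  - rewrite Nat.add_0_r. simpl. lra.
  - replace (n + S t)%nat with (S (n + t)) by lia.
    rewrite S_INR. simpl (m ^ S _). simpl (c ^ S _).
    pose proof (pos_INR n). pose proof (pos_INR t).
    rewrite plus_INR in *.
    assert (Hx : 0 <= m ^ (n + t)) by (apply pow_le; lra).
    set (x := m ^ (n + t)) in *.
    set (j := INR n + INR t) in *.
    assert (Hkey : m * (j + 1 + 1) <= c * (j + 1)).
    { apply Rmult_le_reg_r with K; [lra|].
      replace (c * (j + 1) * K) with ((c * K) * (j + 1)) by ring.
      rewrite Hc. unfold j. nra. }
    assert (Hr : m * x * (j + 1 + 1) * B0 <= c * (x * (j + 1) * B0)).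
    { replace (m * x * (j + 1 + 1) * B0) with ((m * (j + 1 + 1)) * (x * B0)) by ring.
      replace (c * (x * (j + 1) * B0)) with ((c * (j + 1)) * (x * B0)) by ring.
      apply Rmult_le_compat_r; [nra|exact Hkey]. }
    assert (Hc0 : 0 <= c) by nra.
    eapply Rle_trans; [exact Hr|].
    rewrite (Rmult_assoc c (c ^ t)). apply Rmult_le_compat_l; [exact Hc0|exact IH].
Qed.
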